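(* Let $\sigma$ be an anti-involution of $\mathcal D_{as}$, i.e. a $\mathbb C$-linear map with $\sigma^2=\mathrm{id}$ and $\sigma(XY)=\sigma(Y)\sigma(X)$ for all $X,Y$. Suppose $\sigma$ preserves the principal $\mathbb Z$-gradation. Then there is $b\in\mathbb C$ such that $\sigma$ is one of the following: (1) $\sigma_{-,b}$, defined by $\sigma_{-,b}(t)=-t$, $\sigma_{-,b}(D)=-D+b$; (2) $\sigma_{+,b}$, defined by $\sigma_{+,b}(t)=t$, $\sigma_{+,b}(D)=-D+b$.
   Context: $\mathcal D_{as}$ is the associative algebra of differential operators on the circle: it has basis $t^k D^l$ ($k\in\mathbb Z$, $l\in\mathbb Z_{\ge0}$), where $D=t\,\frac{d}{dt}$, with the relation $f(D)\,t^s=t^s f(D+s)$ for polynomials $f$. The principal $\mathbb Z$-gradation assigns degree $k$ to $t^k f(D)$. *)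

(* Defs.v *)
From HB Require Import structures.
From mathcomp Require Import all_boot all_order all_algebra.
From mathcomp Require Import reals.
From mathcomp.real_closed Require Import complex.
From mathcomp Require Import finmap.
From mathcomp.multinomials Require Import monalg.

Set Implicit Arguments.
Unset Strict Implicit.
Unset Printing Implicit Defensive.

Import Order.TTheory GRing.Theory Num.Theory.
Local Open Scope ring_scope.

Section DiffOps.
Variable R : realType.
Local Notation C := (R[i]).

(* The algebra D_as of differential operators on the circle, realised as
   finitely supported functions  int -> {poly C}:  the element f stands for
   sum_k t^k (f@_k)(D).  So t^k D^l is  << 'X^l *g k >>. *)
Definition DAs := {malg {poly C}[int]}.

Definition dshift (p : {poly C}) (m : int) : {poly C} :=
  p \Po ('X + (m%:~R)%:P).

(* Product, from  f(D) t^m = t^m f(D+m):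
   (t^k f(D)) (t^m g(D)) = t^(k+m) f(D+m) g(D). *)
Definition das_mul (f g : DAs) : DAs :=
  \sum_(k <- msupp f) \sum_(m <- msupp g)
     << (dshift f@_k m * g@_m) *g (k + m) >>.

Definition das_scale (c : C) (f : DAs) : DAs := c%:P *: f.

Definition das_one : DAs := << 1 *g 0 >>.
Definition das_t : DAs := << 1 *g 1 >>.
Definition das_tinv : DAs := << 1 *g (-1) >>.
Definition das_D : DAs := << 'X *g 0 >>.

Definition das_homog (k : int) (f : DAs) : Prop :=
  forall m : int, m != k -> f@_m = 0.

Definition das_anti_involution (sigma : DAs -> DAs) : Prop :=
  [/\ forall x y, sigma (x + y) = sigma x + sigma y,
      forall (c : C) x, sigma (das_scale c x) = das_scale c (sigma x),
      forall x, sigma (sigma x) = x &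
      forall x y, sigma (das_mul x y) = das_mul (sigma y) (sigma x)].

Definition das_preserves_grading (sigma : DAs -> DAs) : Prop :=
  forall (k : int) (x : DAs), das_homog k x -> das_homog k (sigma x).

End DiffOps.

(* Main.v *)
Require Import Defs.
From HB Require Import structures.
From mathcomp Require Import all_boot all_order all_algebra.
From mathcomp Require Import reals.
From mathcomp.real_closed Require Import complex.
From mathcomp Require Import finmap.
From mathcomp.multinomials Require Import monalg.
Import Order.TTheory GRing.Theory Num.Theory.
Local Open Scope ring_scope.

Section H.
Variable R : realType.
Local Notation C := (R[i]).

Lemma mulU (a b : {poly C}) (k m : int) :
  das_mul << a *g k >> << b *g m >> = << dshift a m * b *g (k + m) >> :> DAs R.
Proof.
rewrite /das_mul !msuppU.
have [->|a0] := eqVneq a 0.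
  by rewrite big_seq_fset0 /dshift comp_poly0 mul0r monalgU0.
have [->|b0] := eqVneq b 0.
  by rewrite big_seq_fset1 big_seq_fset0 mulr0 monalgU0.
by rewrite !big_seq_fset1 !mcoeffUU.
Qed.

Lemma scaleU (c : C) (a : {poly C}) k :
  das_scale c << a *g k >> = << c%:P * a *g k >> :> DAs R.
Proof.
apply/malgP => j; rewrite mcoeffZ !mcoeffU.
by case: (k == j); rewrite ?mulr1n ?mulr0n ?mulr0.
Qed.

Lemma homogU k (f : DAs R) : das_homog k f -> f = << f@_k *g k >>.
Proof.
move=> h; apply/malgP => j; rewrite mcoeffU.
have [->|kj] := eqVneq k j; first by rewrite mulr1n.
by rewrite mulr0n h // eq_sym.
Qed.

Lemma homogUU k (a : {poly C}) : das_homog k (<< a *g k >> : DAs R).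
Proof. by move=> m mk; rewrite mcoeffU eq_sym (negbTE mk). Qed.

Lemma dshiftC (c : C) m : @dshift R c%:P m = c%:P.
Proof. by rewrite /dshift comp_polyC. Qed.

Lemma dshift0 (p : {poly C}) : @dshift R p 0 = p.
Proof. by rewrite /dshift addr0 comp_polyXr. Qed.

Lemma periodic (s : {poly C}) : @dshift R s 1 = s -> s = (s.[0])%:P.
Proof.
move=> hs.
have hn : forall n : nat, s.[n%:R] = s.[0].
  elim=> [|n IH] //; rewrite -IH.
  by rewrite -{2}hs /dshift horner_comp !hornerE -natr1.
set q := s - (s.[0])%:P.
suff : q = 0 by move/eqP; rewrite subr_eq0 => /eqP.
apply/eqP; apply/negPn/negP => q0.
set rs := [seq (n%:R : C) | n <- iota 0 (size q)].
have H1 : all (root q) rs.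
  apply/allP => x /mapP [n _ ->]; by rewrite /root /q !hornerE hn subrr.
have H2 : uniq_roots rs.
  rewrite uniq_rootsE map_inj_uniq ?iota_uniq //.
  by move=> m n /eqP; rewrite eqr_nat => /eqP.
have := max_ring_poly_roots q0 H1 H2.
by rewrite size_map size_iota ltnn.
Qed.

Lemma relDT : das_mul (das_D R) (das_t R) = das_mul (das_t R) (das_D R) + das_t R.
Proof.
rewrite /das_D /das_t !mulU dshift0 /dshift comp_polyX.
rewrite addr0 add0r mulr1 mul1r -monalgUD; congr << _ *g _ >>.
Qed.

Lemma relTiT : das_mul (das_tinv R) (das_t R) = das_one R.
Proof.
by rewrite /das_tinv /das_t mulU dshiftC mulr1 addNr.
Qed.

Lemma relTTi : das_mul (das_t R) (das_tinv R) = das_one R.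
Proof.
by rewrite /das_tinv /das_t mulU dshiftC mulr1 addrN.
Qed.

Lemma mulU_one (a : {poly C}) : das_mul << a *g 0 >> (das_one R) = << a *g 0 >>.
Proof. by rewrite /das_one mulU dshift0 mulr1 addr0. Qed.

Lemma mulTD (p q : {poly C}) :
  das_mul << p *g 1 >> << q *g 0 >> = << p * q *g 1 >> :> DAs R.
Proof. by rewrite mulU dshift0 addr0. Qed.

Lemma mulDT (p q : {poly C}) :
  das_mul << q *g 0 >> << p *g 1 >> = << dshift q 1 * p *g 1 >> :> DAs R.
Proof. by rewrite mulU add0r. Qed.

Lemma mulTiT (p r : {poly C}) :
  das_mul << r *g -1 >> << p *g 1 >> = << dshift r 1 * p *g 0 >> :> DAs R.
Proof. by rewrite mulU addNr. Qed.

Lemma mulTTi (p r : {poly C}) :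
  das_mul << p *g 1 >> << r *g -1 >> = << dshift p (-1) * r *g 0 >> :> DAs R.
Proof. by rewrite mulU addrN. Qed.

Lemma DE (b : C) : << b%:P - 'X *g 0 >> = - das_D R + das_scale b (das_one R).
Proof. by rewrite /das_D /das_one scaleU mulr1 -monalgUN -monalgUD addrC. Qed.

Lemma scaleT (c : C) : das_scale c (das_t R) = << c%:P *g 1 >>.
Proof. by rewrite /das_t scaleU mulr1. Qed.

Lemma TE : das_t R = << 1 *g 1 >>. Proof. by []. Qed.
Lemma TiE : das_tinv R = << 1 *g -1 >>. Proof. by []. Qed.
Lemma oneE : das_one R = << 1 *g 0 >>. Proof. by []. Qed.

Lemma negU (a : {poly C}) k : << - a *g k >> = - << a *g k >> :> DAs R.
Proof. exact: monalgUN. Qed.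

End H.

Theorem mainTheorem1 (R : realType) (sigma : DAs R -> DAs R) :
  das_anti_involution sigma -> das_preserves_grading sigma ->
  exists b : R[i],
    (* sigma = sigma_{-,b} *)
    (sigma (das_t R) = - das_t R /\ sigma (das_tinv R) = - das_tinv R /\
     sigma (das_D R) = - das_D R + das_scale b (das_one R))
    \/
    (* sigma = sigma_{+,b} *)
    (sigma (das_t R) = das_t R /\ sigma (das_tinv R) = das_tinv R /\
     sigma (das_D R) = - das_D R + das_scale b (das_one R)).
Proof.
move=> [sD sZ sI sM] hg.
have s0 : sigma 0 = 0.
  have h := sD 0 0; rewrite addr0 in h.
  by apply: (addrI (sigma 0)); rewrite -h addr0.
have hT : sigma (das_t R) = << (sigma (das_t R))@_1 *g 1 >>.
  by apply: homogU; apply: hg; apply: homogUU.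
have hTi : sigma (das_tinv R) = << (sigma (das_tinv R))@_(-1) *g (-1) >>.
  by apply: homogU; apply: hg; apply: homogUU.
have hD : sigma (das_D R) = << (sigma (das_D R))@_0 *g 0 >>.
  by apply: homogU; apply: hg; apply: homogUU.
have h1 : sigma (das_one R) = << (sigma (das_one R))@_0 *g 0 >>.
  by apply: homogU; apply: hg; apply: homogUU.
move: hT hTi hD h1.
move: (sigma (das_t R))@_1 => p hT.
move: (sigma (das_tinv R))@_(-1) => r hTi.
move: (sigma (das_D R))@_0 => q hD.
move: (sigma (das_one R))@_0 => e h1.
have e1 : das_mul (sigma (das_one R)) (das_one R) = sigma (das_one R).
  by rewrite h1 mulU_one.
have s1 : sigma (das_one R) = das_one R.
  transitivity (das_mul (sigma (das_one R)) (sigma (sigma (das_one R)))).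
    by rewrite sI e1.
  by rewrite -sM e1 sI.
have p0 : p != 0.
  apply/eqP => p0; move: hT; rewrite p0 monalgU0 => hT.
  have : das_t R = 0 by rewrite -(sI (das_t R)) hT s0.
  move/(congr1 (mcoeff 1)); rewrite TE mcoeffUU mcoeff0.
  by move/eqP; rewrite oner_eq0.
have hq : p * q = dshift q 1 * p + p.
  have := congr1 sigma (relDT R); rewrite sD !sM hT hD mulTD mulDT.
  move=> /(congr1 (mcoeff 1)).
  by rewrite mcoeffD !mcoeffUU.
have hq2 : dshift q 1 = q - 1.
  have : p * (q - dshift q 1 - 1) = 0.
    rewrite !mulrBr hq mulr1 [p * dshift _ _]mulrC.
    by rewrite addrAC addrK subrr.
  move/eqP; rewrite mulf_eq0 (negbTE p0) /= subr_eq0 => /eqP h.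
  by rewrite -h opprB addrC subrK.
have hs : dshift (q + 'X) 1 = q + 'X.
  rewrite /dshift comp_polyD comp_polyX -/(dshift q 1) hq2 mulr1z polyC1.
  by rewrite addrCA subrK addrC.
have Hs := @periodic R _ hs.
exists ((q + 'X).[0]).
have hqb : q = ((q + 'X).[0])%:P - 'X by rewrite -Hs addrK.
have HD : sigma (das_D R) = - das_D R + das_scale ((q + 'X).[0]) (das_one R).
  by rewrite hD {1}hqb DE.
have hpr : dshift r 1 * p = 1.
  have := congr1 sigma (relTTi R); rewrite sM s1 hT hTi mulTiT oneE.
  by move/(congr1 (mcoeff 0)); rewrite !mcoeffUU.
have hrp : dshift p (-1) * r = 1.
  have := congr1 sigma (relTiT R); rewrite sM s1 hT hTi mulTTi oneE.
  by move/(congr1 (mcoeff 0)); rewrite !mcoeffUU.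
have pu : p \is a GRing.unit by apply/unitrPr; exists (dshift r 1); rewrite mulrC.
move: pu; rewrite poly_unitE => /andP [/size_poly1P [c c0 pc] _].
rewrite pc dshiftC in hrp.
have hr : r = (c^-1)%:P.
  by rewrite -[r]mul1r -polyC1 -(mulVf c0) polyCM -mulrA hrp mulr1.
have hcc : c * c = 1.
  have : das_t R = das_scale c (das_scale c (das_t R)).
    by rewrite -{1}(sI (das_t R)) hT pc -scaleT sZ hT pc -scaleT.
  move/(congr1 (mcoeff 1)); rewrite scaleT scaleU TE !mcoeffUU -polyCM.
  by move/polyC_inj.
have : c ^+ 2 == 1 by rewrite expr2 hcc.
rewrite sqrf_eq1 => /orP [/eqP c1|/eqP c1].
  right; split; first by rewrite hT pc c1.
  by split=> //; rewrite hTi hr c1 invr1.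
left; split; first by rewrite hT pc c1 polyCN negU.
by split=> //; rewrite hTi hr c1 invrN1 polyCN negU.
Qed.
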